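(* Let $\delta\in\mathbb R$ and $\nu\in[0,\pi)$, and consider the equation $\mathcal P(\sigma;\delta,\nu)=0$ for $\sigma\in[0,2\pi)$. If $(\delta,\nu)\in\Omega_+$, this equation has exactly four distinct roots in $[0,2\pi)$. If $(\delta,\nu)\in\Omega_-$, it has exactly two distinct roots in $[0,2\pi)$. Moreover, if $(\delta,\nu)\notin\gamma_+\cup\gamma_-$, then every root $\sigma$ satisfies $\mathcal P'(\sigma;\delta,\nu)\neq 0$. Finally, if $\sigma$ is a root with $\mathcal P'(\sigma;\delta,\nu)=\mathcal P''(\sigma;\delta,\nu)=0$, then $\nu=0$, $\sin\sigma=0$ and $\mathcal P'''(\sigma;\delta,\nu)=-3\cos\sigma\neq0$.
   Context: $\mathcal P(\sigma;\delta,\nu):=\delta\sin(2\sigma+\nu)-\sin\sigma$; primes on $\mathcal P$ denote derivatives with respect to $\sigma$. Let $\gamma(\delta,\nu):=(4\delta^2-1)^3-27\delta^2\sin^2\nu$. Define $\Omega_\pm:=\{(\delta,\nu)\in\mathbb R\times[0,\pi):\pm\gamma(\delta,\nu)>0\}$ and $\gamma_\pm:=\{(\delta,\nu)\in\mathbb R\times[0,\pi):\gamma(\delta,\nu)=0,\ \pm\delta>0\}$. *)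

(* Defs.v *)
From Stdlib Require Import Reals Lra List.
Open Scope R_scope.

Definition P (d nu s : R) : R := d * sin (2 * s + nu) - sin s.

Definition P1 (d nu s : R) : R := 2 * d * cos (2 * s + nu) - cos s.
Definition P2 (d nu s : R) : R := (- 4 * d) * sin (2 * s + nu) + sin s.
Definition P3 (d nu s : R) : R := - (8 * d * cos (2 * s + nu)) + cos s.

Lemma P_deriv d nu s : derivable_pt_lim (fun x => P d nu x) s (P1 d nu s).
Proof.
  unfold P, P1.
  replace (2 * d * cos (2 * s + nu) - cos s)
    with (d * (cos (2 * s + nu) * (2 * 1 + 0)) - cos s) by ring.
  apply derivable_pt_lim_minus; [| apply derivable_pt_lim_sin].
  apply derivable_pt_lim_scal.
  apply (derivable_pt_lim_comp (fun x => 2 * x + nu) sin).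
  - apply derivable_pt_lim_plus; [apply derivable_pt_lim_scal, derivable_pt_lim_id
                                 | apply derivable_pt_lim_const].
  - apply derivable_pt_lim_sin.
Qed.

Lemma P1_deriv d nu s : derivable_pt_lim (fun x => P1 d nu x) s (P2 d nu s).
Proof.
  unfold P1, P2.
  replace ((- 4 * d) * sin (2 * s + nu) + sin s)
    with ((2 * d) * (- sin (2 * s + nu) * (2 * 1 + 0)) - - sin s) by ring.
  apply derivable_pt_lim_minus; [| apply derivable_pt_lim_cos].
  apply derivable_pt_lim_scal.
  apply (derivable_pt_lim_comp (fun x => 2 * x + nu) cos).
  - apply derivable_pt_lim_plus; [apply derivable_pt_lim_scal, derivable_pt_lim_id
                                 | apply derivable_pt_lim_const].
  - apply derivable_pt_lim_cos.
Qed.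

Lemma P2_deriv d nu s : derivable_pt_lim (fun x => P2 d nu x) s (P3 d nu s).
Proof.
  unfold P2, P3.
  replace (- (8 * d * cos (2 * s + nu)) + cos s)
    with ((- 4 * d) * (cos (2 * s + nu) * (2 * 1 + 0)) + cos s) by ring.
  apply derivable_pt_lim_plus; [| apply derivable_pt_lim_sin].
  apply derivable_pt_lim_scal.
  apply (derivable_pt_lim_comp (fun x => 2 * x + nu) sin).
  - apply derivable_pt_lim_plus; [apply derivable_pt_lim_scal, derivable_pt_lim_id
                                 | apply derivable_pt_lim_const].
  - apply derivable_pt_lim_sin.
Qed.

Definition gamma (d nu : R) : R := (4 * d ^ 2 - 1) ^ 3 - 27 * d ^ 2 * (sin nu) ^ 2.

Definition Omega_plus (d nu : R) : Prop := 0 <= nu < PI /\ gamma d nu > 0.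
Definition Omega_minus (d nu : R) : Prop := 0 <= nu < PI /\ gamma d nu < 0.
Definition gamma_plus (d nu : R) : Prop := 0 <= nu < PI /\ gamma d nu = 0 /\ d > 0.
Definition gamma_minus (d nu : R) : Prop := 0 <= nu < PI /\ gamma d nu = 0 /\ d < 0.

Definition exactly_n_roots (f : R -> R) (n : nat) : Prop :=
  exists l : list R,
    length l = n /\ NoDup l /\
    (forall s, In s l <-> (0 <= s < 2 * PI /\ f s = 0)).

(* Main.v *)
Require Import Defs.
From Stdlib Require Import Reals Lra Lia List.
Import ListNotations.
Open Scope R_scope.

Lemma gamma_double d nu s : P d nu s = 0 -> P1 d nu s = 0 -> gamma d nu = 0.
Proof.
  unfold P, P1, gamma; intros hP hP1.
  set (A := 2 * s + nu) in *.
  assert (Hn: sin nu = sin A * (cos s * cos s - sin s * sin s) - cos A * (2 * sin s * cos s)).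
  { replace nu with (A - 2*s) by (unfold A; ring). rewrite sin_minus, sin_2a, cos_2a. ring. }
  assert (E1: d * sin nu = - (sin s)^3).
  { rewrite Hn. transitivity ((d*sin A)*(cos s * cos s - sin s * sin s) - (2*d*cos A)*(sin s*cos s)); [ring|].
    replace (d * sin A) with (sin s) by lra. replace (2*d*cos A) with (cos s) by lra. ring. }
  assert (E2: 4*d^2 = 4 * (sin s)^2 + (cos s)^2).
  { pose proof (sin2_cos2 A) as HA. unfold Rsqr in HA.
    transitivity (4*(d*sin A)^2 + (2*d*cos A)^2). { replace (d^2) with (d^2*1) by ring. rewrite <- HA. ring. }
    replace (d * sin A) with (sin s) by lra. replace (2*d*cos A) with (cos s) by lra. ring. }
  replace (27 * d ^ 2 * sin nu ^ 2) with (27 * (d * sin nu)^2) by ring.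
  rewrite E1, E2. pose proof (sin2_cos2 s) as Hs. unfold Rsqr in Hs.
  replace ((cos s)^2) with (1 - (sin s)^2) by (rewrite <- Hs; ring). ring.
Qed.

Lemma gamma_sign d M n : 0 < n^2 -> (4 * M ^ 2 - 1) ^ 3 - 27 * M ^ 2 * n ^ 2 = 0 ->
  ((4 * d ^ 2 - 1) ^ 3 - 27 * d ^ 2 * n ^ 2 > 0 -> d^2 > M^2) /\
  ((4 * d ^ 2 - 1) ^ 3 - 27 * d ^ 2 * n ^ 2 < 0 -> d^2 < M^2).
Proof.
  intros Hn HM.
  set (S := n^2) in *. set (E := M^2) in *. set (D := d^2).
  assert (HE0 : 0 <= E) by (unfold E; nra).
  assert (HD0 : 0 <= D) by (unfold D; nra).
  assert (HEb : 4*E - 1 > 0).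
  { destruct (Rle_lt_dec (4*E-1) 0) as [h|h]; [|lra]. exfalso.
    assert ((4*E-1)^3 <= 0) by (replace ((4*E-1)^3) with ((4*E-1)*((4*E-1)*(4*E-1))) by ring; assert (0 <= (4*E-1)*(4*E-1)) by nra; nra). 
    destruct (Req_dec E 0) as [h0|h0]. { rewrite h0 in HM. lra. }
    assert (0 < 27 * E * S) by (apply Rmult_lt_0_compat; [lra| exact Hn]). lra. }
  set (b := 4*E-1) in *. set (a := 4*D-1).
  assert (HS : 27 * S * E = b^3) by lra.
  assert (Key : (a ^ 3 - 27 * D * S) * E = (a-b)*(a*b*(a+b)+a*a+a*b+b*b)/4).
  { replace ((4 * D - 1) ^ 3 - 27 * D * S) with (a^3 - 27*D*S) by (unfold a; ring).
    replace ((a ^ 3 - 27 * D * S) * E) with (a^3*E - D*(27*S*E)) by ring. rewrite HS.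
    replace E with ((b+1)/4) by (unfold b; field). replace D with ((a+1)/4) by (unfold a; field). field. }
  assert (HEp : E > 0) by (unfold b in HEb; lra).
  split; intro G.
  - destruct (Rle_lt_dec D E) as [h|h]; [|exact h]. exfalso.
    destruct (Rle_lt_dec a 0) as [ha|ha].
    + assert (a^3 <= 0) by (replace (a^3) with (a*(a*a)) by ring; assert (0 <= a*a) by nra; nra).
      assert (0 <= 27*D*S) by (apply Rmult_le_pos; [lra|unfold S; nra]).
      unfold a in *. lra.
    + assert (a - b <= 0) by (unfold a, b; lra).
      assert (0 < a*b*(a+b)+a*a+a*b+b*b) by (assert (0<a*b) by nra; assert (0 < a*b*(a+b)) by nra; nra).
      assert ((a^3 - 27 * D * S) * E > 0) by (apply Rmult_lt_0_compat; lra).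
      rewrite Key in H1. assert ((a - b) * (a * b * (a + b) + a * a + a * b + b * b) <= 0).
      { nra. } lra.
  - destruct (Rle_lt_dec E D) as [h|h]; [|exact h]. exfalso.
    assert (ha : a > 0) by (unfold a, b in *; lra).
    assert (b <= a) by (unfold a, b; lra).
    assert (0 < a*b*(a+b)+a*a+a*b+b*b) by (assert (0<a*b) by nra; assert (0 < a*b*(a+b)) by nra; nra).
    assert ((a ^ 3 - 27 * D * S) * E >= 0) by (rewrite Key; apply Rle_ge; apply Rmult_le_pos; [|lra]; apply Rmult_le_pos; lra).
    assert ((a ^ 3 - 27 * D * S) * E < 0) by (apply Rmult_neg_pos; lra). lra.
Qed.

Lemma sin0_cases s : 0 <= s < 2 * PI -> sin s = 0 -> s = 0 \/ s = PI.
Proof.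
  intros Hs H. destruct (sin_eq_0_0 s H) as [k Hk]. pose proof PI_RGT_0.
  assert (0 <= IZR k) by (destruct (Rle_lt_dec 0 (IZR k)); [lra|nra]).
  assert (IZR k < 2) by (destruct (Rlt_le_dec (IZR k) 2); [lra|nra]).
  apply le_IZR in H1. apply lt_IZR in H2.
  assert (k = 0%Z \/ k = 1%Z) as [->| ->] by lia; [left|right]; rewrite Hk; simpl; ring.
Qed.

Lemma part3 d nu (Hnu : 0 <= nu < PI) :
  ~ (gamma_plus d nu \/ gamma_minus d nu) ->
     forall s, 0 <= s < 2 * PI -> P d nu s = 0 -> P1 d nu s <> 0.
Proof.
  intros Hg s Hs HP HP1. pose proof (gamma_double _ _ _ HP HP1) as G.
  destruct (Rtotal_order d 0) as [h|[h|h]].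
  - apply Hg; right; unfold gamma_minus; auto.
  - subst. unfold P, P1 in *. pose proof (sin2_cos2 s). unfold Rsqr in H. nra.
  - apply Hg; left; unfold gamma_plus; auto.
Qed.

Lemma part4 d nu (Hnu : 0 <= nu < PI) : forall s, 0 <= s < 2 * PI -> P d nu s = 0 ->
     P1 d nu s = 0 -> P2 d nu s = 0 ->
     nu = 0 /\ sin s = 0 /\ P3 d nu s = - 3 * cos s /\ - 3 * cos s <> 0.
Proof.
  intros s Hs HP HP1 HP2. unfold P, P1, P2, P3 in *.
  assert (Hs0 : sin s = 0) by lra.
  pose proof (sin2_cos2 s) as Hsc. unfold Rsqr in Hsc.
  assert (Hc : cos s <> 0) by (intro; nra).
  assert (Hd : d <> 0) by (intro; subst; lra).
  assert (HA : sin (2*s+nu) = 0).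
  { rewrite Hs0 in HP. destruct (Req_dec (sin (2*s+nu)) 0); auto. exfalso.
    assert (d * sin (2*s+nu) <> 0) by (apply Rmult_integral_contrapositive; auto). lra. }
  split; [|split; [exact Hs0|split; [lra|lra]]].
  destruct (sin0_cases s Hs Hs0) as [->| ->].
  - replace (2*0+nu) with nu in HA by ring.
    destruct (Req_dec nu 0); auto. assert (0 < sin nu) by (apply sin_gt_0; lra). lra.
  - replace (2*PI+nu) with (nu + 2 * INR 1 * PI) in HA by (simpl; ring). rewrite sin_period in HA.
    destruct (Req_dec nu 0); auto. assert (0 < sin nu) by (apply sin_gt_0; lra). lra.
Qed.

Lemma P_nu0 d s : P d 0 s = sin s * (2 * d * cos s - 1).
Proof. unfold P. replace (2*s+0) with (2*s) by ring. rewrite sin_2a. ring. Qed.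

Lemma cos_2PI_minus x : cos (2*PI - x) = cos x.
Proof. rewrite cos_minus, cos_2PI, sin_2PI. ring. Qed.

Lemma nu0_plus d : Omega_plus d 0 -> exactly_n_roots (fun s => P d 0 s) 4.
Proof.
  intros [_ G]. unfold gamma in G. rewrite sin_0 in G.
  assert (Hd : 4*d^2 - 1 > 0).
  { destruct (Rle_lt_dec (4*d^2-1) 0) as [h|h]; [|lra]. exfalso.
    assert (0 <= (4*d^2-1)*(4*d^2-1)) by nra.
    assert ((4*d^2-1)^3 <= 0) by (replace ((4*d^2-1)^3) with ((4*d^2-1)*((4*d^2-1)*(4*d^2-1))) by ring; nra).
    lra. }
  assert (Hd0 : d <> 0) by (intro; subst; lra).
  set (u := / (2*d)).
  assert (Hu : -1 < u < 1).
  { unfold u. destruct (Rlt_le_dec 0 d).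
    - assert (1 < 2*d) by nra. split; [ | apply (Rmult_lt_reg_l (2*d)); [lra|]; rewrite Rinv_r; lra].
      assert (0 < / (2*d)) by (apply Rinv_0_lt_compat; lra). lra.
    - assert (2*d < -1) by nra. split.
      + apply (Rmult_lt_reg_l (-(2*d))); [lra|]. replace (- (2 * d) * / (2 * d)) with (-1) by (field; auto). lra.
      + assert (/ (2*d) < 0) by (apply Rinv_lt_0_compat; lra). lra. }
  set (x := acos u). assert (Hx := acos_bound_lt u Hu). fold x in Hx.
  assert (Hcx : cos x = u) by (apply cos_acos; lra).
  pose proof PI_RGT_0.
  assert (Hroot : forall s, P d 0 s = 0 <-> sin s = 0 \/ cos s = u).
  { intro s. rewrite P_nu0. split.
    - intro h. destruct (Rmult_integral _ _ h) as [h1|h1]; [left; auto|right].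
      unfold u. apply (Rmult_eq_reg_l (2*d)); [|lra]. rewrite Rinv_r; lra.
    - intros [h|h]; [rewrite h; ring|]. rewrite h. unfold u. field_simplify; [ring|auto]. }
  exists [0; x; PI; 2*PI - x]. split; [reflexivity|split].
  - repeat constructor; simpl; intuition lra.
  - intro s. rewrite Hroot. simpl. split.
    + intros [h|[h|[h|[h|[]]]]]; subst s.
      * split; [lra|left; apply sin_0].
      * split; [lra|right; auto].
      * split; [lra|left; apply sin_PI].
      * split; [lra|right; rewrite cos_2PI_minus; auto].
    + intros [Hs [h|h]].
      * destruct (sin0_cases s Hs h) as [->| ->]; auto.
      * destruct (Rle_lt_dec s PI).
        -- right; left. apply cos_inj; lra.
        -- right; right; right; left. assert (2*PI - s = x) by (apply cos_inj; try lra; rewrite cos_2PI_minus; lra). lra.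
Qed.

Lemma nu0_minus d : Omega_minus d 0 -> exactly_n_roots (fun s => P d 0 s) 2.
Proof.
  intros [_ G]. unfold gamma in G. rewrite sin_0 in G.
  assert (Hd : 4*d^2 - 1 < 0).
  { destruct (Rle_lt_dec 0 (4*d^2-1)) as [h|h]; [|lra]. exfalso.
    assert (0 <= (4*d^2-1)*(4*d^2-1)) by nra.
    assert ((4*d^2-1)^3 >= 0) by (replace ((4*d^2-1)^3) with ((4*d^2-1)*((4*d^2-1)*(4*d^2-1))) by ring; nra).
    lra. }
  pose proof PI_RGT_0.
  assert (Hroot : forall s, P d 0 s = 0 <-> sin s = 0).
  { intro s. rewrite P_nu0. split.
    - intro h. destruct (Rmult_integral _ _ h) as [h1|h1]; auto. exfalso.
      pose proof (COS_bound s). assert (cos s * cos s <= 1) by nra.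
      assert (1 = 4 * (d^2) * (cos s * cos s)) by (replace 1 with ((2*d*cos s)^2) by (rewrite (Rminus_diag_uniq _ _ h1); ring); ring).
      assert (4 * d^2 * (cos s * cos s) <= 4*d^2) by (assert (0 <= d^2) by nra; nra). lra.
    - intro h; rewrite h; ring. }
  exists [0; PI]. split; [reflexivity|split].
  - repeat constructor; simpl; intuition lra.
  - intro s. rewrite Hroot. simpl. split.
    + intros [h|[h|[]]]; subst s.
      * split; [lra|apply sin_0].
      * split; [lra|apply sin_PI].
    + intros [Hs h]. destruct (sin0_cases s Hs h) as [->| ->]; auto.
Qed.

Definition roots_in (f : R -> R) (a b : R) (l : list R) : Prop :=
  NoDup l /\ forall s, In s l <-> (a < s < b /\ f s = 0).

Lemma roots_in_nil f a b : (forall s, a < s < b -> f s <> 0) -> roots_in f a b [].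
Proof. intro H. split; [constructor|]. intro s; simpl; split; [intros []|]. intros [h1 h2]; exact (H s h1 h2). Qed.

Lemma roots_in_one f a b r : a < r < b -> f r = 0 -> (forall s, a < s < b -> f s = 0 -> s = r) ->
  roots_in f a b [r].
Proof.
  intros h1 h2 h3. split; [repeat constructor; simpl; tauto|].
  intro s; simpl; split.
  - intros [<-|[]]; auto.
  - intros [h4 h5]; left; symmetry; auto.
Qed.

Lemma roots_in_app f a b c l1 l2 : a <= b -> b <= c -> f b <> 0 -> roots_in f a b l1 -> roots_in f b c l2 ->
  roots_in f a c (l1 ++ l2).
Proof.
  intros Hab Hbc Hb [N1 H1] [N2 H2]. split.
  - apply NoDup_app; auto. intros x i1 i2. apply H1 in i1. apply H2 in i2. destruct i1 as [[? ?] _]; destruct i2 as [[? ?] _]. lra.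
  - intro s. rewrite in_app_iff, H1, H2. split.
    + intros [[[h0 h] h']|[[h0 h] h']]; split; auto; split; lra.
    + intros [h h']. destruct (Rtotal_order s b) as [h2|[h2|h2]].
      * left; destruct h; split; auto; lra.
      * subst; contradiction.
      * right; destruct h; split; auto; lra.
Qed.

Lemma P_shift d nu x : P (-d) nu (x + PI) = - P d nu x.
Proof.
  unfold P. replace (2*(x+PI)+nu) with ((2*x+nu) + 2 * INR 1 * PI) by (simpl; ring).
  rewrite sin_period, neg_sin. ring.
Qed.

Lemma roots_in_shift d nu a b l : roots_in (P d nu) a b l ->
  roots_in (P (-d) nu) (a + PI) (b + PI) (map (fun x => x + PI) l).
Proof.
  intros [N H]. split.
  - apply NoDup_map_NoDup_ForallPairs; auto. intros x y _ _ e. lra.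
  - intro s. rewrite in_map_iff. split.
    + intros [x [<- hx]]. apply H in hx. destruct hx as [h1 h2]. rewrite P_shift, h2. split; [lra|ring].
    + intros [h1 h2]. exists (s - PI). split; [ring|]. apply H.
      replace s with ((s - PI) + PI) in h2 by ring. rewrite P_shift in h2. split; [lra|lra].
Qed.

Lemma P_period d nu x : P d nu (x + 2*PI) = P d nu x.
Proof.
  unfold P. replace (2*(x+2*PI)+nu) with ((2*x+nu) + 2 * INR 2 * PI) by (simpl; ring).
  replace (x + 2*PI) with (x + 2 * INR 1 * PI) by (simpl; ring).
  rewrite !sin_period. ring.
Qed.

Lemma roots_in_exact d nu a l : -2*PI < a <= 0 -> P d nu a <> 0 ->
  roots_in (P d nu) a (a + 2*PI) l -> exactly_n_roots (fun s => P d nu s) (length l).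
Proof.
  intros Ha Hpa [N H]. pose proof PI_RGT_0.
  set (g := fun x => if Rlt_dec x 0 then x + 2*PI else x).
  exists (map g l). split; [apply length_map|split].
  - apply NoDup_map_NoDup_ForallPairs; auto. intros x y ix iy e.
    apply H in ix. apply H in iy. unfold g in e.
    destruct (Rlt_dec x 0); destruct (Rlt_dec y 0); lra.
  - intro s. rewrite in_map_iff. split.
    + intros [x [<- hx]]. apply H in hx. destruct hx as [h1 h2]. unfold g.
      destruct (Rlt_dec x 0).
      * rewrite P_period. split; [lra|auto].
      * split; [lra|auto].
    + intros [h1 h2]. destruct (Rlt_le_dec s (a + 2*PI)).
      * exists s. unfold g. destruct (Rlt_dec s 0); [lra|]. split; auto. apply H. split; auto.
        split; [|lra]. destruct (Req_dec s a); [subst; contradiction|lra].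
      * exists (s - 2*PI). assert (P d nu (s - 2*PI) = 0) by (rewrite <- P_period; replace (s - 2*PI + 2*PI) with s by ring; auto).
        unfold g. destruct (Rlt_dec (s - 2*PI) 0); [|lra]. split; [ring|]. apply H. split; auto.
        split; [|lra]. destruct (Req_dec (s - 2*PI) a) as [e|e]; [rewrite <- e in Hpa; contradiction|lra].
Qed.

Lemma dA_sin nu s : derivable_pt_lim (fun x => sin (2*x+nu)) s (2 * cos (2*s+nu)).
Proof.
  replace (2 * cos (2*s+nu)) with (cos (2*s+nu) * (2*1+0)) by ring.
  apply (derivable_pt_lim_comp (fun x => 2 * x + nu) sin).
  - apply derivable_pt_lim_plus; [apply derivable_pt_lim_scal, derivable_pt_lim_id | apply derivable_pt_lim_const].
  - apply derivable_pt_lim_sin.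
Qed.

Lemma dA_cos nu s : derivable_pt_lim (fun x => cos (2*x+nu)) s (- (2 * sin (2*s+nu))).
Proof.
  replace (- (2 * sin (2*s+nu))) with (- sin (2*s+nu) * (2*1+0)) by ring.
  apply (derivable_pt_lim_comp (fun x => 2 * x + nu) cos).
  - apply derivable_pt_lim_plus; [apply derivable_pt_lim_scal, derivable_pt_lim_id | apply derivable_pt_lim_const].
  - apply derivable_pt_lim_cos.
Qed.

Lemma pow_lt_0_compat_sq (x:R) : x <> 0 -> 0 < x^2.
Proof. intro h. simpl. rewrite Rmult_1_r. pose proof (Rsqr_pos_lt x h). unfold Rsqr in H. exact H. Qed.

Definition K nu s := cos s * sin (2*s+nu) - 2 * sin s * cos (2*s+nu).
Definition H nu s := sin s / sin (2*s+nu).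

Lemma K_deriv nu s : derivable_pt_lim (K nu) s (3 * sin s * sin (2*s+nu)).
Proof.
  pose proof (derivable_pt_lim_minus _ _ s _ _
     (derivable_pt_lim_mult _ _ s _ _ (derivable_pt_lim_cos s) (dA_sin nu s))
     (derivable_pt_lim_mult _ _ s _ _ (derivable_pt_lim_scal sin 2 s _ (derivable_pt_lim_sin s)) (dA_cos nu s))) as D.
  match type of D with derivable_pt_lim _ _ ?l =>
    replace (3 * sin s * sin (2*s+nu)) with l by (unfold mult_real_fct; ring) end.
  exact D.
Qed.

Lemma H_deriv nu s : sin (2*s+nu) <> 0 -> derivable_pt_lim (H nu) s (K nu s / (sin (2*s+nu))^2).
Proof.
  intro h. pose proof (derivable_pt_lim_div _ _ s _ _ (derivable_pt_lim_sin s) (dA_sin nu s) h) as D.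
  match type of D with derivable_pt_lim _ _ ?l =>
    replace (K nu s / (sin (2*s+nu))^2) with l by (unfold K, Rsqr; field; auto) end.
  exact D.
Qed.

Lemma P_cont d nu : continuity (P d nu).
Proof. intro x. apply derivable_continuous_pt. exists (P1 d nu x). apply P_deriv. Qed.

Lemma K_cont nu : continuity (K nu).
Proof. intro x. apply derivable_continuous_pt. exists (3 * sin x * sin (2*x+nu)). apply K_deriv. Qed.

Lemma P_H d nu s : sin (2*s+nu) <> 0 -> P d nu s = sin (2*s+nu) * (d - H nu s).
Proof. intro h. unfold P, H. field. auto. Qed.

Lemma H_rolle nu a b : a < b -> (forall s, a <= s <= b -> sin (2*s+nu) <> 0) ->
  H nu a = H nu b -> exists c, a < c < b /\ K nu c = 0.
Proof.
  intros hab hs he.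
  destruct (MVT_cor2 (H nu) (fun s => K nu s / (sin (2*s+nu))^2) a b hab) as [c [e hc]].
  - intros c hc. apply H_deriv. auto.
  - exists c. split; auto. rewrite he in e. replace (H nu b - H nu b) with 0 in e by ring.
    assert (sin (2*c+nu) <> 0) by (apply hs; lra).
    assert (K nu c / (sin (2*c+nu))^2 = 0).
    { symmetry in e. destruct (Rmult_integral _ _ e); auto. lra. }
    unfold Rdiv in H1. destruct (Rmult_integral _ _ H1); auto.
    exfalso. revert H2. apply Rinv_neq_0_compat. apply pow_nonzero. auto.
Qed.

Lemma H_mono nu a b : a < b -> (forall s, a <= s <= b -> sin (2*s+nu) <> 0) ->
  (forall s, a < s < b -> K nu s > 0) -> H nu a < H nu b.
Proof.
  intros hab hs hk.
  destruct (MVT_cor2 (H nu) (fun s => K nu s / (sin (2*s+nu))^2) a b hab) as [c [e hc]].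
  - intros c hc. apply H_deriv. auto.
  - assert (sin (2*c+nu) <> 0) by (apply hs; lra).
    assert (0 < (sin (2*c+nu))^2) by (apply pow_lt_0_compat_sq; auto).
    assert (0 < K nu c / (sin (2*c+nu))^2) by (apply Rdiv_lt_0_compat; auto; apply hk; auto).
    assert (0 < K nu c / (sin (2*c+nu))^2 * (b - a)) by (apply Rmult_lt_0_compat; lra). lra.
Qed.

Lemma H_mono' nu a b : a < b -> (forall s, a <= s <= b -> sin (2*s+nu) <> 0) ->
  (forall s, a < s < b -> K nu s < 0) -> H nu b < H nu a.
Proof.
  intros hab hs hk.
  destruct (MVT_cor2 (H nu) (fun s => K nu s / (sin (2*s+nu))^2) a b hab) as [c [e hc]].
  - intros c hc. apply H_deriv. auto.
  - assert (sin (2*c+nu) <> 0) by (apply hs; lra).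
    assert (0 < (sin (2*c+nu))^2) by (apply pow_lt_0_compat_sq; auto).
    assert (K nu c / (sin (2*c+nu))^2 < 0).
    { unfold Rdiv. apply Rmult_neg_pos; [apply hk; auto|]. apply Rinv_0_lt_compat; auto. }
    assert (K nu c / (sin (2*c+nu))^2 * (b - a) < 0) by (apply Rmult_neg_pos; lra). lra.
Qed.

Lemma root_between f a b : continuity f -> a < b -> f a * f b < 0 -> exists z, a < z < b /\ f z = 0.
Proof.
  intros hc hab hp. destruct (IVT_cor f a b hc (Rlt_le _ _ hab) (Rlt_le _ _ hp)) as [z [hz e]].
  exists z. split; auto. split.
  - destruct hz as [h1 _]. destruct (Req_dec a z) as [<-|]; [|lra]. rewrite e in hp. lra.
  - destruct hz as [_ h1]. destruct (Req_dec z b) as [->|]; [|lra]. rewrite e in hp. lra.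
Qed.

Lemma root_H d nu s : sin (2*s+nu) <> 0 -> P d nu s = 0 -> H nu s = d.
Proof. intros h e. rewrite (P_H d nu s h) in e. destruct (Rmult_integral _ _ e); [contradiction|lra]. Qed.

Lemma at_most_one d nu a b : (forall s, a < s < b -> sin (2*s+nu) <> 0) ->
  (forall s, a < s < b -> K nu s <> 0) ->
  forall s r, a < s < b -> a < r < b -> P d nu s = 0 -> P d nu r = 0 -> s = r.
Proof.
  intros hs hk.
  assert (W : forall s r, a < s < b -> a < r < b -> P d nu s = 0 -> P d nu r = 0 -> s < r -> False).
  { intros s r h1 h2 e1 e2 lt.
    destruct (H_rolle nu s r lt) as [c [hc hkc]].
    - intros x hx. apply hs. lra.
    - rewrite (root_H d nu s), (root_H d nu r); auto.
    - apply (hk c); auto. lra. }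
  intros s r h1 h2 e1 e2. destruct (Rtotal_order s r) as [h|[h|h]]; auto; exfalso.
  - exact (W s r h1 h2 e1 e2 h).
  - exact (W r s h2 h1 e2 e1 h).
Qed.

Lemma sin_kPI k x : x = IZR k * PI -> sin x = 0.
Proof. intro h. apply sin_eq_0_1. exists k; auto. Qed.

Lemma J0 d nu : 0 < nu < PI -> exists r, roots_in (P d nu) (-nu/2) ((PI-nu)/2) [r].
Proof.
  intros Hnu. pose proof PI_RGT_0.
  assert (hsA : forall s, -nu/2 < s < (PI-nu)/2 -> sin (2*s+nu) > 0) by (intros s hs; apply sin_gt_0; lra).
  assert (hK0 : K nu 0 = sin nu) by (unfold K; rewrite sin_0, cos_0; replace (2*0+nu) with nu by ring; ring).
  assert (hsn : sin nu > 0) by (apply sin_gt_0; lra).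
  assert (hK : forall s, -nu/2 < s < (PI-nu)/2 -> K nu s > 0).
  { intros s hs. destruct (Rtotal_order s 0) as [h|[h|h]].
    - destruct (MVT_cor2 (K nu) (fun x => 3 * sin x * sin (2*x+nu)) s 0 h) as [c [e hc]].
      + intros c _. apply K_deriv.
      + assert (sin c < 0) by (apply sin_lt_0_var; lra).
        assert (sin (2*c+nu) > 0) by (apply hsA; lra).
        assert (3 * sin c * sin (2*c+nu) < 0) by nra.
        assert (3 * sin c * sin (2*c+nu) * (0 - s) < 0) by (apply Rmult_neg_pos; lra). lra.
    - subst; lra.
    - destruct (MVT_cor2 (K nu) (fun x => 3 * sin x * sin (2*x+nu)) 0 s h) as [c [e hc]].
      + intros c _. apply K_deriv.
      + assert (sin c > 0) by (apply sin_gt_0; lra).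
        assert (sin (2*c+nu) > 0) by (apply hsA; lra).
        assert (3 * sin c * sin (2*c+nu) > 0) by nra.
        assert (3 * sin c * sin (2*c+nu) * (s - 0) > 0) by (apply Rmult_lt_0_compat; lra). lra. }
  assert (hp0 : P d nu (-nu/2) = sin (nu/2)).
  { unfold P. replace (2*(-nu/2)+nu) with 0 by field. rewrite sin_0.
    replace (-nu/2) with (-(nu/2)) by field. rewrite sin_neg. ring. }
  assert (hp1 : P d nu ((PI-nu)/2) = - sin ((PI-nu)/2)).
  { unfold P. replace (2*((PI-nu)/2)+nu) with PI by field. rewrite sin_PI. ring. }
  assert (s1 : sin (nu/2) > 0) by (apply sin_gt_0; lra).
  assert (s2 : sin ((PI-nu)/2) > 0) by (apply sin_gt_0; lra).
  destruct (root_between (P d nu) (-nu/2) ((PI-nu)/2) (P_cont d nu)) as [r [hr er]].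
  - lra.
  - rewrite hp0, hp1. nra.
  - exists r. apply roots_in_one; auto.
    intros s hs es. apply (at_most_one d nu (-nu/2) ((PI-nu)/2)); auto.
    + intros x hx. specialize (hsA x hx). lra.
    + intros x hx. specialize (hK x hx). lra.
Qed.

Lemma J1 nu : 0 < nu < PI -> exists M, M < 0 /\ gamma M nu = 0 /\
  (forall d, d < M -> exists l, length l = 2%nat /\ roots_in (P d nu) ((PI-nu)/2) (PI - nu/2) l) /\
  (forall d, M < d -> roots_in (P d nu) ((PI-nu)/2) (PI - nu/2) []).
Proof.
  intros Hnu. pose proof PI_RGT_0 as hPI.
  set (p1 := (PI-nu)/2). set (p2 := PI - nu/2).
  assert (hsA : forall s, p1 < s < p2 -> sin (2*s+nu) < 0) by (intros s hs; unfold p1, p2 in hs; apply sin_lt_0; lra).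
  assert (hss : forall s, p1 < s < p2 -> sin s > 0) by (intros s hs; unfold p1, p2 in hs; apply sin_gt_0; lra).
  assert (e1 : 2*p1+nu = PI) by (unfold p1; field).
  assert (e2 : 2*p2+nu = 2*PI) by (unfold p2; field).
  assert (s1 : sin p1 > 0) by (unfold p1; apply sin_gt_0; lra).
  assert (s2 : sin p2 > 0) by (unfold p2; apply sin_gt_0; lra).
  assert (K1 : K nu p1 = 2 * sin p1) by (unfold K; rewrite e1, sin_PI, cos_PI; ring).
  assert (K2 : K nu p2 = - 2 * sin p2) by (unfold K; rewrite e2, sin_2PI, cos_2PI; ring).
  assert (hp12 : p1 < p2) by (unfold p1, p2; lra).
  destruct (root_between (K nu) p1 p2 (K_cont nu) hp12) as [c [hc hkc]].
  { rewrite K1, K2. nra. }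
  assert (hKd : forall x y, p1 < x -> x < y -> y < p2 -> K nu y < K nu x).
  { intros x y hx hxy hy.
    destruct (MVT_cor2 (K nu) (fun x => 3 * sin x * sin (2*x+nu)) x y hxy) as [z [e hz]].
    - intros z _. apply K_deriv.
    - assert (sin z > 0) by (apply hss; lra). assert (sin (2*z+nu) < 0) by (apply hsA; lra).
      assert (3 * sin z * sin (2*z+nu) < 0) by nra.
      assert (3 * sin z * sin (2*z+nu) * (y - x) < 0) by (apply Rmult_neg_pos; lra). lra. }
  assert (hKp : forall s, p1 < s < c -> K nu s > 0).
  { intros s hs. pose proof (hKd s c). lra. }
  assert (hKn : forall s, c < s < p2 -> K nu s < 0).
  { intros s hs. pose proof (hKd c s). lra. }
  assert (hsAc : sin (2*c+nu) < 0) by (apply hsA; auto).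
  assert (hsAc' : sin (2*c+nu) <> 0) by lra.
  set (M := H nu c).
  assert (hM : M < 0).
  { unfold M, H. unfold Rdiv. rewrite Rmult_comm. apply Rmult_neg_pos; [|apply hss; auto].
    apply Rinv_lt_0_compat; auto. }
  assert (hHle : forall s, p1 < s < p2 -> s <> c -> H nu s < M).
  { intros s hs hne. destruct (Rtotal_order s c) as [h|[h|h]]; [| contradiction |].
    - apply H_mono; auto.
      + intros x hx. assert (sin (2*x+nu) < 0) by (apply hsA; lra). lra.
      + intros x hx. apply hKp. lra.
    - apply H_mono'; auto.
      + intros x hx. assert (sin (2*x+nu) < 0) by (apply hsA; lra). lra.
      + intros x hx. apply hKn. lra. }
  exists M. split; [auto|split].
  { apply (gamma_double M nu c).
    - rewrite P_H; auto. unfold M. ring.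
    - unfold P1. replace (2 * M * cos (2 * c + nu) - cos c) with (- K nu c / sin (2*c+nu)).
      + rewrite hkc. field. auto.
      + unfold M, H, K. field. auto. }
  split.
  - intros d hd.
    assert (hPc : P d nu c > 0) by (rewrite P_H; auto; fold M; nra).
    assert (hP1 : P d nu p1 = - sin p1) by (unfold P; rewrite e1, sin_PI; ring).
    assert (hP2 : P d nu p2 = - sin p2) by (unfold P; rewrite e2, sin_2PI; ring).
    destruct (root_between (P d nu) p1 c (P_cont d nu)) as [r1 [hr1 er1]]; [lra| rewrite hP1; nra |].
    destruct (root_between (P d nu) c p2 (P_cont d nu)) as [r2 [hr2 er2]]; [lra| rewrite hP2; nra |].
    exists ([r1] ++ [r2]). split; [reflexivity|].
    apply (roots_in_app _ _ c); try lra.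
    + apply roots_in_one; auto. intros s hs es. apply (at_most_one d nu p1 c); auto.
      * intros x hx. assert (sin (2*x+nu) < 0) by (apply hsA; lra). lra.
      * intros x hx. specialize (hKp x hx). lra.
    + apply roots_in_one; auto. intros s hs es. apply (at_most_one d nu c p2); auto.
      * intros x hx. assert (sin (2*x+nu) < 0) by (apply hsA; lra). lra.
      * intros x hx. specialize (hKn x hx). lra.
  - intros d hd. apply roots_in_nil. intros s hs.
    assert (hA : sin (2*s+nu) < 0) by (apply hsA; auto).
    rewrite P_H; [|lra].
    assert (hle : H nu s <= M) by (destruct (Req_dec s c) as [->|ne]; [unfold M; lra| left; apply hHle; auto]).
    assert (hpos : 0 < d - H nu s) by lra.
    assert (sin (2*s+nu) * (d - H nu s) < 0) by (apply Rmult_neg_pos; lra). lra.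
Qed.

Lemma assemble d nu l0 l1 l2 l3 : 0 < nu < PI ->
  roots_in (P d nu) (-nu/2) ((PI-nu)/2) l0 ->
  roots_in (P d nu) ((PI-nu)/2) (PI - nu/2) l1 ->
  roots_in (P (-d) nu) (-nu/2) ((PI-nu)/2) l2 ->
  roots_in (P (-d) nu) ((PI-nu)/2) (PI - nu/2) l3 ->
  exactly_n_roots (fun s => P d nu s) (length l0 + length l1 + length l2 + length l3).
Proof.
  intros Hnu R0 R1 R2 R3. pose proof PI_RGT_0 as hPI.
  apply roots_in_shift in R2. apply roots_in_shift in R3. rewrite Ropp_involutive in R2, R3.
  replace (-nu/2 + PI) with (PI - nu/2) in R2 by field.
  replace ((PI-nu)/2 + PI) with ((3*PI - nu)/2) in R2, R3 by field.
  replace (PI - nu/2 + PI) with (-nu/2 + 2*PI) in R3 by field.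
  assert (e : forall k, 2 * ((IZR k * PI - nu)/2) + nu = IZR k * PI) by (intro; field).
  assert (Pk : forall k, P d nu ((IZR k * PI - nu)/2) = - sin ((IZR k * PI - nu)/2)).
  { intro k. unfold P. rewrite e. rewrite (sin_kPI k (IZR k * PI)); auto. ring. }
  assert (N1 : P d nu ((PI-nu)/2) <> 0).
  { replace PI with (IZR 1 * PI) at 1 by (simpl; ring). rewrite Pk.
    assert (sin ((IZR 1 * PI - nu)/2) > 0) by (apply sin_gt_0; simpl; lra). lra. }
  assert (N2 : P d nu (PI - nu/2) <> 0).
  { replace (PI - nu/2) with ((IZR 2 * PI - nu)/2) by (simpl; field). rewrite Pk.
    assert (sin ((IZR 2 * PI - nu)/2) > 0) by (apply sin_gt_0; simpl; lra). lra. }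
  assert (N3 : P d nu ((3*PI - nu)/2) <> 0).
  { replace (3*PI) with (IZR 3 * PI) by (simpl; ring). rewrite Pk.
    assert (sin ((IZR 3 * PI - nu)/2) < 0) by (apply sin_lt_0; simpl; lra). lra. }
  assert (N0 : P d nu (-nu/2) <> 0).
  { unfold P. replace (2*(-nu/2)+nu) with 0 by field. rewrite sin_0.
    replace (-nu/2) with (-(nu/2)) by field. rewrite sin_neg.
    assert (sin (nu/2) > 0) by (apply sin_gt_0; lra). lra. }
  pose proof (roots_in_app _ (-nu/2) ((PI-nu)/2) (PI-nu/2) _ _ ltac:(lra) ltac:(lra) N1 R0 R1) as R01.
  pose proof (roots_in_app _ (-nu/2) (PI-nu/2) ((3*PI-nu)/2) _ _ ltac:(lra) ltac:(lra) N2 R01 R2) as R012.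
  pose proof (roots_in_app _ (-nu/2) ((3*PI-nu)/2) (-nu/2+2*PI) _ _ ltac:(lra) ltac:(lra) N3 R012 R3) as R.
  pose proof (roots_in_exact d nu (-nu/2) _ ltac:(lra) N0 R) as X.
  rewrite !length_app, !length_map in X. exact X.
Qed.

Lemma pos_case d nu : 0 < nu < PI ->
  (gamma d nu > 0 -> exactly_n_roots (fun s => P d nu s) 4) /\
  (gamma d nu < 0 -> exactly_n_roots (fun s => P d nu s) 2).
Proof.
  intros Hnu. destruct (J1 nu Hnu) as [M [hM [gM [Jlt Jgt]]]].
  assert (hsn : 0 < sin nu ^ 2) by (assert (sin nu > 0) by (apply sin_gt_0; lra); nra).
  destruct (gamma_sign d M (sin nu) hsn gM) as [Gp Gm].
  destruct (J0 d nu Hnu) as [r0 R0]. destruct (J0 (-d) nu Hnu) as [r2 R2].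
  split; intro G.
  - specialize (Gp G). assert (d < M \/ -d < M) as [h|h] by nra.
    + destruct (Jlt d h) as [l [hl R1]].
      pose proof (Jgt (-d) ltac:(lra)) as R3.
      pose proof (assemble d nu _ _ _ _ Hnu R0 R1 R2 R3) as X. rewrite hl in X. exact X.
    + destruct (Jlt (-d) h) as [l [hl R3]].
      pose proof (Jgt d ltac:(lra)) as R1.
      pose proof (assemble d nu _ _ _ _ Hnu R0 R1 R2 R3) as X. rewrite hl in X. exact X.
  - specialize (Gm G). assert (M < d /\ M < -d) as [h1 h2] by nra.
    pose proof (Jgt d h1) as R1. pose proof (Jgt (-d) h2) as R3.
    exact (assemble d nu _ _ _ _ Hnu R0 R1 R2 R3).
Qed.

Theorem mainTheorem1 (d nu : R) (Hnu : 0 <= nu < PI) :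
  (Omega_plus d nu -> exactly_n_roots (fun s => P d nu s) 4) /\
  (Omega_minus d nu -> exactly_n_roots (fun s => P d nu s) 2) /\
  (~ (gamma_plus d nu \/ gamma_minus d nu) ->
     forall s, 0 <= s < 2 * PI -> P d nu s = 0 -> P1 d nu s <> 0) /\
  (forall s, 0 <= s < 2 * PI -> P d nu s = 0 ->
     P1 d nu s = 0 -> P2 d nu s = 0 ->
     nu = 0 /\ sin s = 0 /\ P3 d nu s = - 3 * cos s /\ - 3 * cos s <> 0).
Proof.
  split; [|split; [|split; [apply part3; auto | apply part4; auto]]].
  - destruct (Req_dec nu 0) as [->|hn]; [apply nu0_plus|].
    assert (h : 0 < nu < PI) by lra. destruct (pos_case d nu h) as [X _].
    intros [_ G]; auto.
  - destruct (Req_dec nu 0) as [->|hn]; [apply nu0_minus|].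
    assert (h : 0 < nu < PI) by lra. destruct (pos_case d nu h) as [_ X].
    intros [_ G]; auto.
Qed.
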